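(* In the setting described in the context, assume $G$ satisfies Condition 1. Then for every $r\ge0$, at least $\max\{sp(\mathbf{A}),f+1\}$ columns of $\Phi(r+\nu-1,r)$ are lower bounded component-wise by $\beta^{\nu}\mathbf{1}$, where $\mathbf{1}\in\mathbb{R}^{n-\phi}$ is the all-ones column vector.
   Context: A synchronous system of $n$ agents communicates over a directed graph $G=(\mathcal{V},\mathcal{E})$, $\mathcal{V}=\{1,\dots,n\}$, without self-loops; $N_i^-=\{j:(j,i)\in\mathcal{E}\}$. At most $f$ agents are Byzantine faulty (may send arbitrary, possibly inconsistent values); $\mathcal{F}$ is the set of faulty agents, $\phi=|\mathcal{F}|\le f$, and the non-faulty agents are indexed $1,\dots,n-\phi$. An assignment matrix $\mathbf{A}\in\mathbb{R}^{k\times n}$ has nonnegative entries and columns summing to $1$; agent $i$ holds $g_i=\sum_{j=1}^k\mathbf{A}_{ji}h_j$ for admissible (convex, $L$-Lipschitz, nonempty compact argmin) $h_1,\dots,h_k:\mathbb{R}\to\mathbb{R}$. Sparsity parameter $sp(\mathbf{A})$: smallest $s$ such that the sum of any $s$ columns of $\mathbf{A}$ is component-wise positive ($n+1$ if the sum of all columns is not). Reduced graph w.r.t. $\mathcal{F}$: subgraph of $G$ obtained by removing the nodes of $\mathcal{F}$ with their edges and then removing up to $f$ additional incoming edges at each remaining node; $R_{\mathcal{F}}$ is the (finite) set of all reduced graphs and $\tau=|R_{\mathcal{F}}|$. A source component of a graph is the set of its nodes each having a directed path to every other node of the graph. Condition 1: for every $\mathcal{F}'\subseteq\mathcal{V}$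 with $|\mathcal{F}'|\le f$, every reduced graph w.r.t. $\mathcal{F}'$ has a source component with at least $\max\{f+1,sp(\mathbf{A})\}$ nodes. Algorithm 2 (run by non-faulty agents, step sizes $\alpha(t)$): arbitrary $x_i(0)$; in iteration $t\ge1$ agent $i$ sends $x_i(t-1)$ to all out-neighbors, receives a multiset of $|N_i^-|$ values (a default value replacing any missing message), discards the $f$ smallest and $f$ largest values (ties broken arbitrarily), lets $N_i^*(t)$ be the senders of the remaining values with $w_j$ the value from $j$, sets $w_i=x_i(t-1)$, and updates $x_i(t)=\frac{1}{|N_i^*(t)|+1}\sum_{j\in\{i\}\cup N_i^*(t)}w_j-\alpha(t-1)d_i(t-1)$, with $d_i(t-1)$ a (sub)gradient of $g_i$ at $x_i(t-1)$. Known matrix representation: with $\mathbf{x}(t)\in\mathbb{R}^{n-\phi}$ the vector of non-faulty states and $\mathbf{d}(t)$ the vector of the $d_i(t)$, one has $\mathbf{x}(t+1)=\mathbf{M}(t)\mathbf{x}(t)-\alpha(t)\mathbf{d}(t)$ for row-stochastic $(n-\phi)\times(n-\phi)$ matrices $\mathbf{M}(t)$ (depending on the execution), and there is a constant $0<\beta<1$ such that for every $t$ there is a reduced graph $\mathcal{H}(t)\in R_{\mathcal{F}}$ whose adjacency matrix $\mathbf{H}(t)$ (with $\mathbf{H}_{ij}(t)=1$ if $i=j$ or $(j,i)$ is an edge of $\mathcal{H}(t)$, and $0$ otherwise) satisfies $\mathbf{M}(t)\ge\beta\mathbf{H}(t)$ entrywise. Define $\Phi(t,r)=\mathbf{M}(t)\mathbf{M}(t-1)\cdots\mathbf{M}(r)$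 for $t\ge r$, and $\nu=\tau(n-\phi)$. *)

(* Defs.v *)
From HB Require Import structures.
From mathcomp Require Import all_boot all_order all_algebra.
Set Implicit Arguments. Unset Strict Implicit. Unset Printing Implicit Defensive.
Import Order.TTheory GRing.Theory Num.Theory.
Local Open Scope ring_scope.

(* Agents are 'I_n.  A directed graph on the agents is given by its edge set
   E : {set 'I_n * 'I_n}; the pair (j, i) \in E means the edge j -> i. *)

Definition sp_ok (R : numDomainType) (k n : nat) (A : 'M[R]_(k, n)) (s : nat) : bool :=
  [forall S : {set 'I_n}, (#|S| == s) ==> [forall j : 'I_k, 0 < \sum_(i in S) A j i]].

Definition sp (R : numDomainType) (k n : nat) (A : 'M[R]_(k, n)) : nat :=
  if [forall j : 'I_k, 0 < \sum_(i < n) A j i]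
  then find (sp_ok A) (iota 0 n.+1)
  else n.+1.

Definition assignment_matrix (R : numDomainType) (k n : nat) (A : 'M[R]_(k, n)) : Prop :=
  (forall j i, 0 <= A j i) /\ (forall i, \sum_(j < k) A j i = 1).

(* E is a reduced graph of G w.r.t. F: obtained by deleting the nodes of F
   (with their edges) and then deleting at most f incoming edges at every
   remaining node.  Its node set is ~: F. *)
Definition is_reduced (n : nat) (G : {set 'I_n * 'I_n}) (f : nat) (F : {set 'I_n})
    (E : {set 'I_n * 'I_n}) : bool :=
  [forall e in E, [&& e \in G, e.1 \notin F & e.2 \notin F]] &&
  [forall i in ~: F,
     (#|[set j | [&& (j, i) \in G, j \notin F & (j, i) \notin E]]| <= f)%N].

Definition reduced_graphs (n : nat) (G : {set 'I_n * 'I_n}) (f : nat) (F : {set 'I_n})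
    : {set {set 'I_n * 'I_n}} :=
  [set E | is_reduced G f F E].

Definition source_component (n : nat) (F : {set 'I_n}) (E : {set 'I_n * 'I_n})
    : {set 'I_n} :=
  [set i in ~: F | [forall j in ~: F, connect (fun x y => (x, y) \in E) i j]].

Definition condition1 (R : numDomainType) (k n : nat) (G : {set 'I_n * 'I_n})
    (f : nat) (A : 'M[R]_(k, n)) : Prop :=
  forall (F' : {set 'I_n}), (#|F'| <= f)%N ->
  forall E, is_reduced G f F' E -> (maxn f.+1 (sp A) <= #|source_component F' E|)%N.

(* Indexing of the non-faulty agents by 'I_(n - phi), phi = #|F|
   (in increasing order of agent labels). *)
Definition nf_agent (n : nat) (F : {set 'I_n}) (i : 'I_#|~: F|) : 'I_n :=
  enum_val i.

Definition adj_mx (R : numDomainType) (n : nat) (F : {set 'I_n}) (E : {set 'I_n * 'I_n})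
    : 'M[R]_#|~: F| :=
  \matrix_(i, j) (if (i == j) || ((nf_agent j, nf_agent i) \in E) then 1 else 0).

Definition Phi (R : numDomainType) (m : nat) (M : nat -> 'M[R]_m) (t r : nat) : 'M[R]_m :=
  \big[mulmx/1%:M]_(i < (t - r).+1) M (t - i)%N.

(* Main.v *)
Require Import Defs.
From HB Require Import structures.
From mathcomp Require Import all_boot all_order all_algebra.
From mathcomp Require Import zify.
Import Order.TTheory GRing.Theory Num.Theory.
Local Open Scope ring_scope.

Lemma path_exit (T : eqType) (e : rel T) (p : pred T) x s :
  p x -> ~~ p (last x s) -> path e x s -> exists a b, [/\ e a b, p a & ~~ p b].
Proof.
elim: s x => [|y s IH] x /= px.
  by rewrite px.
move=> nl /andP[exy ps].
case py: (p y); first exact: IH py nl ps.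
by exists x, y; rewrite px py.
Qed.

Fixpoint Qp (R : numDomainType) m (M : nat -> 'M[R]_m) r s : 'M[R]_m :=
  if s is s'.+1 then M (r + s')%N *m Qp R m M r s' else 1%:M.
Arguments Qp {R m} M r s.

Lemma Phi_Qp (R : numDomainType) m (M : nat -> 'M[R]_m) r s :
  Phi M (r + s) r = Qp M r s.+1.
Proof.
rewrite /Phi addKn. elim: s => [|s IH].
  by rewrite big_ord_recl big_ord0 /= !addn0 subn0.
rewrite big_ord_recl subn0 /=. congr (_ *m _). rewrite -[RHS]/(Qp M r s.+1) -IH.
by apply: eq_bigr => i _; rewrite /bump /= add1n addnS subSS.
Qed.

Theorem lemma2 (R : realFieldType) (n k f : nat)
    (G : {set 'I_n * 'I_n}) (A : 'M[R]_(k, n))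
    (F : {set 'I_n}) (M : nat -> 'M[R]_#|~: F|) (beta : R) :
  (forall i : 'I_n, (i, i) \notin G) ->
  assignment_matrix A ->
  (#|F| <= f)%N ->
  condition1 G f A ->
  (forall t i j, 0 <= M t i j) ->
  (forall t i, \sum_j M t i j = 1) ->
  0 < beta < 1 ->
  (forall t, exists2 E, E \in reduced_graphs G f F &
       forall i j, beta * adj_mx R F E i j <= M t i j) ->
  let nu := (#|reduced_graphs G f F| * #|~: F|)%N in
  forall r : nat,
    (maxn (sp A) f.+1 <=
      #|[set j | [forall i, (beta ^+ nu <= Phi M (r + nu).-1 r i j)%R]]|)%N.
Proof.
move=> Gnl Aok Ff c1 M0 M1 /andP[b0 b1] Hex nu r.
set RG := reduced_graphs G f F.
pose good t E := [forall i, forall j, beta * adj_mx R F E i j <= M t i j].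
pose Hs t := odflt set0 [pick E in RG | good t E].
have HsP t : Hs t \in RG /\ good t (Hs t).
  rewrite /Hs; case: pickP => [E /andP[h1 h2]|none] //=.
  exfalso; case: (Hex t) => E ERG EM; move: (none E); rewrite ERG /=.
  by move/negP; apply; apply/forallP => i; apply/forallP => j; exact: EM.
have Mge t i j : (enum_val j, enum_val i) \in Hs t -> beta <= M t i j.
  move=> h; have := forallP (forallP (HsP t).2 i) j.
  by rewrite mxE /nf_agent h orbT mulr1.
have Mdiag t i : beta <= M t i i.
  have := forallP (forallP (HsP t).2 i) i.
  by rewrite mxE eqxx mulr1.
have Q0 s i j : 0 <= Qp M r s i j.
  elim: s i j => [|s IH] i j /=; first by rewrite mxE ler0n.
  by rewrite mxE; apply: sumr_ge0 => l _; apply: mulr_ge0.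
have Qstep s i l j : M (r + s)%N i l * Qp M r s l j <= Qp M r s.+1 i j.
  rewrite /= mxE (bigD1 l) //= lerDl; apply: sumr_ge0 => l' _.
  exact: mulr_ge0.
pose cnt E s := count (fun x => Hs (r + x)%N == E) (iota 0 s).
have sumcnt : (\sum_(E in RG) cnt E nu = nu)%N.
  rewrite /cnt; rewrite -[X in (_ = X)%N](size_iota 0 nu).
  elim: (iota 0 nu) => [|x sq IH] /=; first by rewrite big1.
  rewrite big_split /= IH (bigD1 (Hs (r+x)%N)) ?(HsP _).1 //= eqxx big1 ?addn0 //.
  by move=> E /andP[_ /negbTE]; rewrite eq_sym => ->.
have RG0 : (0 < #|RG|)%N by apply/card_gt0P; exists (Hs 0%N); exact: (HsP _).1.
have redRG E : E \in RG -> is_reduced G f F E by rewrite inE.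
have SCF E x : x \in source_component F E -> x \in ~: F.
  by rewrite inE => /andP[].
have m0 : (0 < #|~: F|)%N.
  have := c1 F Ff _ (redRG _ (HsP 0%N).1).
  set SC := source_component _ _ => h.
  have : (#|SC| <= #|~: F|)%N by apply: subset_leq_card; apply/subsetP => x /SCF.
  move: h; rewrite geq_max; lia.
have hex : [exists E in RG, #|~: F| <= cnt E nu]%N.
  apply: contraT => /exists_inPn H.
  have : (nu <= #|RG| * (#|~: F|).-1)%N.
    rewrite -{1}sumcnt -sum_nat_const; apply: leq_sum => E ERG.
    by have := H E ERG; rewrite -ltnNge; lia.
  rewrite /nu leqNgt ltn_pmul2l //; lia.
have [E ERG Ecnt] : exists2 E, E \in RG & (#|~: F| <= cnt E nu)%N by apply/exists_inP.
set SC := source_component F E.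
have key j : enum_val j \in SC -> forall i, beta ^+ nu <= Qp M r nu i j.
  move=> jSC.
  pose S s := [set i | beta ^+ s <= Qp M r s i j].
  have sub s : S s \subset S s.+1.
    apply/subsetP => i; rewrite !inE => h.
    apply: le_trans (Qstep s i i j); rewrite exprS.
    exact: ler_pM (ltW b0) (exprn_ge0 _ (ltW b0)) (Mdiag _ _) h.
  have jS s : j \in S s.
    elim: s => [|s IH]; first by rewrite inE /= mxE eqxx expr0.
    exact: (subsetP (sub s)).
  have cntS s : cnt E s.+1 = (cnt E s + (Hs (r + s)%N == E))%N.
    by rewrite /cnt -addn1 iotaD count_cat /= add0n addn0.
  have grow s : (minn #|~: F| (cnt E s).+1 <= #|S s|)%N.
    elim: s => [|s IH].
      have : (0 < #|S 0%N|)%N by apply/card_gt0P; exists j; exact: jS.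
      rewrite /cnt /=; lia.
    have cs := subset_leq_card (sub s).
    have cT : (#|S s.+1| <= #|~: F|)%N.
      by rewrite -[X in (_ <= X)%N]card_ord; apply: max_card.
    rewrite cntS; case: eqP => HE /=; last by rewrite addn0; exact: leq_trans IH cs.
    rewrite addn1.
    case: (ltnP #|S s| #|~: F|) => hlt; last by apply: leq_trans (geq_minl _ _) _; exact: leq_trans hlt cs.
    have /subsetPn [i2 _ i2S] : ~~ ([set: 'I_#|~: F|] \subset S s).
      by apply/negP => /subset_leq_card; rewrite cardsT card_ord leqNgt hlt.
    move: jSC; rewrite inE => /andP[_ /forall_inP /(_ (enum_val i2) (enum_valP i2))].
    move=> /connectP [p pth lst].
    pose pp := fun x : 'I_n => [exists i in S s, enum_val i == x].
    have p1 : pp (enum_val j) by apply/exists_inP; exists j => //; exact: jS.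
    have p2 : ~~ pp (last (enum_val j) p).
      rewrite -lst; apply/negP => /exists_inP [i ii /eqP /enum_val_inj ie].
      by move: i2S; rewrite -ie ii.
    have [a [b [ab pa pb]]] := @path_exit _ _ pp _ _ p1 p2 pth.
    have := (redRG E ERG); case/andP => /forall_inP /(_ _ ab) /and3P [_ aF bF] _.
    case/exists_inP: pa => i1 i1S /eqP i1a.
    have bF' : b \in ~: F by rewrite inE.
    set i3 := enum_rank_in bF' b.
    have i3b : enum_val i3 = b by rewrite enum_rankK_in.
    have i3S : i3 \notin S s.
      by apply/negP => h; move/negP: pb; apply; apply/exists_inP; exists i3; rewrite ?i3b.
    have i3S' : i3 \in S s.+1.
      rewrite inE; apply: le_trans (Qstep s i3 i1 j); rewrite exprS.
      apply: ler_pM (ltW b0) (exprn_ge0 _ (ltW b0)) _ _.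
        by apply: Mge; rewrite HE i1a i3b.
      by move: i1S; rewrite inE.
    have : (#|i3 |: S s| <= #|S s.+1|)%N.
      apply: subset_leq_card; apply/subsetP => x; rewrite in_setU1 => /orP[/eqP ->//|].
      exact: (subsetP (sub s)).
    rewrite cardsU1 i3S add1n => h2.
    have hc : ((cnt E s).+1 <= #|S s|)%N.
      move: IH; rewrite /minn; case: ifP => // _ h.
      by move: (leq_ltn_trans h hlt); rewrite ltnn.
    apply: leq_trans (geq_minr _ _) _.
    exact: leq_trans h2.
  have ST : S nu = setT.
    apply/eqP; rewrite eqEcard subsetT cardsT card_ord.
    by move: (grow nu) Ecnt; lia.
  by move=> i; have := in_setT i; rewrite -ST inE.
have nuS : nu = nu.-1.+1 by rewrite prednK // /nu muln_gt0 RG0 m0.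
have PhiQ q : Phi M (r + q.+1).-1 r = Qp M r q.+1 by rewrite addnS /= Phi_Qp.
rewrite maxnC; apply: leq_trans (c1 F Ff E (redRG E ERG)) _.
apply: (@leq_trans #|[set j | enum_val j \in SC]|).
  apply: leq_trans (leq_imset_card (@enum_val _ (mem (~: F))) _).
  apply: subset_leq_card; apply/subsetP => x xSC.
  have xF := SCF E x xSC.
  apply/imsetP; exists (enum_rank_in xF x); last by rewrite enum_rankK_in.
  by rewrite inE enum_rankK_in.
apply: subset_leq_card; apply/subsetP => j; rewrite in_set => jSC; rewrite in_set.
apply/forallP => i; rewrite nuS PhiQ -nuS; apply: (key j _ i).
exact: jSC.
Qed.
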